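(* In any iteration of Algorithm 1, if there exist an integer $m\ge0$ and an index $j\in\{1,\dots,n\}$ such that $i^*=b^m(j)$, then $i_L<j$ (where $i^*,i_L$ are the quantities of that iteration).
   Context: Problem (P): given an integer $n\ge1$, reals $0<q_1\le\cdots\le q_n$, $z_1,\dots,z_n>0$ and $K>0$, maximize $\sum_{i=1}^n x_i$ subject to $0\le x_i\le q_i$, $0\le x_1\le\cdots\le x_n$, $\sum_{i=1}^n z_ix_i\le K$. For $1\le i<j\le n+1$ let $\mathrm{sum}(i,j)=z_i+\cdots+z_{j-1}$ and $\mathrm{avg}(i,j)=\mathrm{sum}(i,j)/(j-i)$. Algorithm 1 (run on an instance of (P)): Initialize $S=\{0,n+1\}$, $y_i=\mathrm{avg}(i,n+1)$ and $x_i=0$ for $i=1,\dots,n$, and $\hat B=K$. While $\hat B>0$ and $S\ne\{0,1,\dots,n+1\}$, perform an iteration: let $i^*$ be the index $i\in\{1,\dots,n\}\setminus S$ minimizing $y_i$, ties broken in favour of the smallest index; let $i_L=\max\{j\in S:j<i^*\}$ and $i_R=\min\{j\in S:j>i^*\}$; set $d=\min\{\hat B/((i_R-i^* )y_{i^*}),\ q_{i^*}-x_{i^*}\}$; set $\hat B\leftarrow\hat B-d(i_R-i^* )y_{i^*}$; set $x_i\leftarrow x_i+d$ for all $i^*\le i<i_R$; set $y_i\leftarrow\mathrm{avg}(i,i^* )$ for all $i_L<i<i^*$; add $i^*$ to $S$. Finally output $x_1,\dots,x_n$. Blocker: for $1\le i\le n$, $b(i)$ is the value of $i^*$ in the last iteration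 in which $y_i$ is updated (i.e. the last iteration with $i_L<i<i^*$); if $y_i$ is never updated, $b(i)=n+1$. Iterates: $b^0$ is the identity and $b^m(i)=b(b^{m-1}(i))$ (defined as long as $b^{m-1}(i)\le n$). *)

(* Defs.v *)
From mathcomp Require Import all_boot all_order all_algebra.
Set Implicit Arguments. Unset Strict Implicit. Unset Printing Implicit Defensive.
Import Order.TTheory GRing.Theory Num.Theory.
Local Open Scope ring_scope.

(* Indices are natural numbers; q, z are only meaningful on 1..n. *)

Definition zsum (R : realFieldType) (z : nat -> R) (i j : nat) : R :=
  \sum_(i <= k < j) z k.

Definition avg (R : realFieldType) (z : nat -> R) (i j : nat) : R :=
  zsum z i j / (j - i)%:R.

(* State of Algorithm 1: the set S (as a boolean predicate on nat),
   the vectors y and x, and the remaining budget B-hat. *)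
Record state (R : realFieldType) := State {
  stS : nat -> bool;
  sty : nat -> R;
  stx : nat -> R;
  stB : R }.

Definition init (R : realFieldType) (n : nat) (z : nat -> R) (K : R) : state R :=
  State (fun k => (k == 0)%N || (k == n.+1)) (fun i => avg z i n.+1)
        (fun _ => 0) K.

(* Loop condition: B-hat > 0 and S <> {0,1,...,n+1}
   (S is always a subset of {0,...,n+1}). *)
Definition loop_cond (R : realFieldType) (n : nat) (st : state R) : bool :=
  (0 < stB st) && ~~ all (stS st) (iota 0 n.+2).

(* Index i in {1..n} \ S minimizing y_i, ties broken toward the smallest index. *)
Definition pick_star (R : realFieldType) (n : nat) (st : state R) : option nat :=
  foldl (fun best i =>
           if stS st i then best else
           match best with
           | None => Some i
           | Some b => if sty st i < sty st b then Some i else best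
           end) None (iota 1 n).

Definition i_star (R : realFieldType) (n : nat) (st : state R) : nat :=
  odflt 0%N (pick_star n st).

Definition i_L (R : realFieldType) (n : nat) (st : state R) : nat :=
  last 0%N [seq j <- iota 0 (i_star n st) | stS st j].

Definition i_R (R : realFieldType) (n : nat) (st : state R) : nat :=
  head n.+1 [seq j <- iota (i_star n st).+1 (n - i_star n st).+1 | stS st j].

Definition step (R : realFieldType) (n : nat) (q : nat -> R) (z : nat -> R)
    (st : state R) : state R :=
  if loop_cond n st then
    let i := i_star n st in
    let iL := i_L n st in
    let iR := i_R n st in
    let c := (iR - i)%:R * sty st i in
    let d := Num.min (stB st / c) (q i - stx st i) in
    State (fun k => stS st k || (k == i))
          (fun k => if (iL < k < i)%N then avg z k i else sty st k)
          (fun k => if (i <= k < iR)%N then stx st k + d else stx st k)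
          (stB st - d * c)
  else st.

Definition state_at (R : realFieldType) (n : nat) (q z : nat -> R) (K : R)
    (k : nat) : state R :=
  iter k (step n q z) (init n z K).

Definition performed (R : realFieldType) (n : nat) (q z : nat -> R) (K : R)
    (k : nat) : bool :=
  loop_cond n (state_at n q z K k).

(* Blocker b(i): i* of the last iteration with i_L < i < i*; n+1 if none.
   At most n iterations are performed (each adds a new index of 1..n to S),
   so scanning iterations 0..n covers all of them. *)
Definition blocker (R : realFieldType) (n : nat) (q z : nat -> R) (K : R)
    (i : nat) : nat :=
  let ks := [seq k <- iota 0 n.+1 |
              performed n q z K k &&
              (i_L n (state_at n q z K k) < i < i_star n (state_at n q z K k))%N] in
  if ks is [::] then n.+1 else i_star n (state_at n q z K (last 0%N ks)).

(* Main.v *)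
Require Import Defs.
From mathcomp Require Import all_boot all_order all_algebra.
Import Order.TTheory GRing.Theory Num.Theory.
Local Open Scope ring_scope.

Lemma path_le_last (y : nat) (t : seq nat) :
  path leq y t -> forall x, x \in y :: t -> (x <= last y t)%N.
Proof.
elim: t y => [|a t IH] y /=.
  by move=> _ x; rewrite inE => /eqP ->.
move=> /andP [hya hp] x; rewrite inE => /orP [/eqP ->|hx].
  apply: leq_trans hya _; exact: IH hp a (mem_head _ _).
exact: IH hp x hx.
Qed.

Lemma sorted_le_last (s : seq nat) d x :
  sorted leq s -> x \in s -> (x <= last d s)%N.
Proof.
case: s => [//|y t] /= hp hx; exact: path_le_last hp x hx.
Qed.

Lemma step_S {R : realFieldType} n (q z : nat -> R) (st : state R) x :
  stS (step n q z st) x = stS st x || (loop_cond n st && (x == i_star n st)).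
Proof.
rewrite /step; case: (loop_cond n st) => /=; last by rewrite orbF.
by [].
Qed.

Lemma S_mono {R : realFieldType} {n} {q z : nat -> R} {K k1 k2 x} :
  (k1 <= k2)%N -> stS (state_at n q z K k1) x -> stS (state_at n q z K k2) x.
Proof.
move=> hk; elim: k2 hk => [|k2 IH]; first by rewrite leqn0 => /eqP ->.
rewrite leq_eqVlt => /orP [/eqP -> //|hk] h.
rewrite /state_at iterS -/(state_at n q z K k2) step_S.
by rewrite IH.
Qed.

Lemma S_0 {R : realFieldType} n (q z : nat -> R) K k :
  stS (state_at n q z K k) 0 && stS (state_at n q z K k) n.+1.
Proof.
apply/andP; split; apply: (@S_mono _ _ _ _ _ 0) => //=; by rewrite eqxx ?orbT.
Qed.

Lemma pick_spec {R : realFieldType} (st : state R) (s : seq nat) acc :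
  match foldl (fun best i =>
           if stS st i then best else
           match best with
           | None => Some i
           | Some b => if sty st i < sty st b then Some i else best
           end) acc s with
  | Some i => (acc == Some i) || ((i \in s) && ~~ stS st i)
  | None => (acc == None) && all (stS st) s
  end.
Proof.
elim: s acc => [|a s IH] acc /=.
  by case: acc => [i|] //=; rewrite eqxx.
move: (IH (if stS st a then acc else match acc with
           | None => Some a
           | Some b => if sty st a < sty st b then Some a else acc end)).
case: (foldl _ _ s) => [i|].
  case hSa: (stS st a) => /=.
    move=> /orP [->//|/andP [hi hn]]; by rewrite inE hi orbT hn orbT.
  case: acc => [b|] /=; first case: ifP => _;
  move=> /orP [/eqP [<-]|/andP [hi hn]]; by rewrite ?inE ?eqxx ?hSa ?hi ?hn ?orbT.
case hSa: (stS st a) => /=; first by [].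
by case: acc => [b|] //=; case: ifP.
Qed.

Lemma istar_spec {R : realFieldType} {n} {q z : nat -> R} {K k} :
  performed n q z K k ->
  let st := state_at n q z K k in
  [/\ (1 <= i_star n st)%N, (i_star n st <= n)%N & ~~ stS st (i_star n st)].
Proof.
move=> hp st; move: hp; rewrite /performed /loop_cond -/st => /andP [_ hall].
have h0 := @S_0 R n q z K k; move: h0 => /andP [h0 hn1].
rewrite /i_star.
move: (@pick_spec R st (iota 1 n) None).
rewrite -/(pick_star n st).
case: (pick_star n st) => [i|] /=.
  move=> /andP [hi hn]; rewrite mem_iota in hi; move: hi => /andP [h1 h]; split => //.
move=> hall'; exfalso; move: hall.
have -> : iota 0 n.+2 = (0 :: iota 1 n ++ [:: n.+1])%N.
  by rewrite (_ : n.+2 = 1 + (n + 1))%N ?iotaD ?add0n ?addn1 // ?add1n.  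
by rewrite /= all_cat /= -/st h0 hall' hn1.
Qed.

Lemma iL_spec {R : realFieldType} {n} {q z : nat -> R} {K k} :
  performed n q z K k ->
  let st := state_at n q z K k in
  [/\ stS st (i_L n st), (i_L n st < i_star n st)%N &
      forall x, stS st x -> (x < i_star n st)%N -> (x <= i_L n st)%N].
Proof.
move=> hp st; case: (istar_spec hp) => h1 _ _.
have /andP [h0 _] := @S_0 R n q z K k.
set L := [seq j <- iota 0 (i_star n st) | stS st j].
have h0L : 0%N \in L by rewrite mem_filter h0 mem_iota.
have hlast : i_L n st \in L.
  rewrite /i_L -/L; case: L h0L => [//|a t] _ /=; exact: (mem_last a t).
have hsort : sorted leq L by apply: sorted_filter; [exact: leq_trans | exact: iota_sorted].
move: hlast; rewrite mem_filter mem_iota add0n => /andP [hS /andP [_ hlt]].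
split => // x hx hxi.
apply: sorted_le_last hsort _; by rewrite mem_filter hx mem_iota.
Qed.

Lemma istar_inj {R : realFieldType} {n} {q z : nat -> R} {K k1 k2} :
  performed n q z K k1 -> performed n q z K k2 ->
  i_star n (state_at n q z K k1) = i_star n (state_at n q z K k2) -> k1 = k2.
Proof.
wlog hle : k1 k2 / (k1 <= k2)%N.
  move=> H h1 h2 he; case: (leqP k1 k2) => h; first exact: H.
  by symmetry; apply: H => //; apply: ltnW.
move=> h1 h2 he; apply/eqP; rewrite eqn_leq hle /=; rewrite leqNgt; apply/negP => hlt.
case: (istar_spec h2) => _ _ hn.
have hS : stS (state_at n q z K k1.+1) (i_star n (state_at n q z K k1)).
  rewrite /state_at iterS -/(state_at n q z K k1) step_S.
  by rewrite -[loop_cond _ _]/(performed n q z K k1) h1 eqxx orbT.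
by move: hn; rewrite -he (S_mono hlt hS).
Qed.

Lemma blocker_spec {R : realFieldType} {n} {q z : nat -> R} {K i} :
  (blocker n q z K i <= n)%N ->
  exists k, [/\ performed n q z K k,
    (i_L n (state_at n q z K k) < i < i_star n (state_at n q z K k))%N &
    blocker n q z K i = i_star n (state_at n q z K k)].
Proof.
rewrite /blocker.
set ks := [seq k <- iota 0 n.+1 | _].
have : last 0%N ks \in ks -> True by [].
case hks: ks => [|a t]; first by rewrite ltnn.
move=> _ _; exists (last 0%N (a :: t)).
have : last 0%N (a :: t) \in ks by rewrite hks; exact: mem_last.
rewrite mem_filter => /andP [/andP [hp hi] _]; split => //.
Qed.

Theorem lemma10 (R : realFieldType) (n : nat) (q z : nat -> R) (K : R)
    (hn : (1 <= n)%N)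
    (hq_pos : forall i, (1 <= i <= n)%N -> 0 < q i)
    (hq_mono : forall i j, (1 <= i)%N -> (i <= j)%N -> (j <= n)%N -> q i <= q j)
    (hz_pos : forall i, (1 <= i <= n)%N -> 0 < z i)
    (hK : 0 < K)
    (k m j : nat) :
  performed n q z K k ->
  (1 <= j <= n)%N ->
  (forall m', (m' < m)%N -> (iter m' (blocker n q z K) j <= n)%N) ->
  i_star n (state_at n q z K k) = iter m (blocker n q z K) j ->
  (i_L n (state_at n q z K k) < j)%N.
Proof.
move=> hp hj; elim: m k hp => [|m IH] k hp hm.
  by move=> /= <-; case: (iL_spec hp).
rewrite iterS => he.
set jm := iter m (blocker n q z K) j in he.
have hb : (blocker n q z K jm <= n)%N by rewrite -he; case: (istar_spec hp).
case: (blocker_spec hb) => k' [hp' /andP [h1 h2] hbe].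
have ekk : k = k' by apply: (istar_inj hp hp'); rewrite he hbe.
subst k'.
case: m IH hm @jm he hb h1 h2 hbe => [|m] IH hm jm he hb h1 h2 hbe.
  exact: h1.
have hjm : (jm <= n)%N by apply: hm.
have hjm' : (iter m (blocker n q z K) j <= n)%N by apply: hm; apply: ltnW.
rewrite /jm iterS in hjm.
case: (blocker_spec hjm) => k2 [hp2 _ hbe2].
have IH2 := IH k2 hp2 (fun m' h => hm m' (ltnW h)).
have hk2 : i_star n (state_at n q z K k2) = jm by rewrite /jm iterS hbe2.
have {}IH2 := IH2 hk2.
case: (iL_spec hp) => hSL _ _.
case: (iL_spec hp2) => _ _ hmax2.
have hnot : ~~ stS (state_at n q z K k) jm.
  apply/negP => hS; case: (iL_spec hp) => _ _ hmax.
  by move: (hmax _ hS h2); rewrite leqNgt h1.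
have hle : (k <= k2)%N.
  rewrite leqNgt; apply/negP => hlt; move/negP: hnot; apply.
  apply: (S_mono hlt).
  rewrite /state_at iterS -/(state_at n q z K k2) step_S.
  by rewrite -[loop_cond _ _]/(performed n q z K k2) hp2 hk2 eqxx orbT.
apply: leq_ltn_trans IH2.
apply: hmax2; first exact: S_mono hle hSL.
by rewrite hk2.
Qed.
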